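(* For any two finite integer sequences $A$ and $B$, $\mathrm{lcis}(\mathrm{inflate}(A),\mathrm{inflate}(B))=2\cdot\mathrm{lcis}(A,B)$.
   Context: For integer sequences, $\mathrm{lcis}(X_1,\dots,X_k)$ denotes the length of the longest strictly increasing sequence that is a subsequence of each $X_i$. For $A=\langle a_0,\dots,a_{n-1}\rangle$, $\mathrm{inflate}(A)=\langle 2a_0-1,2a_0,2a_1-1,2a_1,\dots,2a_{n-1}-1,2a_{n-1}\rangle$. *)

(* Defs.v *)
From mathcomp Require Import all_boot all_order all_algebra.
Set Implicit Arguments. Unset Strict Implicit. Unset Printing Implicit Defensive.
Import Order.TTheory GRing.Theory Num.Theory.
Local Open Scope ring_scope.

Definition is_cis (s X Y : seq int) : bool :=
  [&& sorted (fun a b : int => a < b) s, subseq s X & subseq s Y].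

(* lcis X Y = maximum length of a common strictly increasing subsequence;
   every subsequence of X is mask m X for some m of length size X. *)
Definition lcis (X Y : seq int) : nat :=
  (\max_(m : (size X).-tuple bool | is_cis (mask m X) X Y) size (mask m X))%N.

Definition inflate (A : seq int) : seq int :=
  flatten [seq [:: 2 * a - 1; 2 * a] | a <- A].

(* Main.v *)
Require Import Defs.
From mathcomp Require Import all_boot all_order all_algebra zify.
Import Order.TTheory GRing.Theory Num.Theory.

Section Aux.
Local Open Scope ring_scope.

Lemma lcis_ub (s X Y : seq int) : is_cis s X Y -> (size s <= lcis X Y)%N.
Proof.
move=> H; have /and3P[_ sX _] := H.
case/subseqP: sX => m sm ->{s} in H *.
have sm' : size m == size X by apply/eqP.
pose t := Tuple sm'.
by apply: (@leq_bigmax_cond _ (fun m : (size X).-tuple bool => is_cis (mask m X) X Y) (fun m => size (mask m X)) t).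
Qed.

Lemma lcis_le (X Y : seq int) n :
  (forall s, is_cis s X Y -> (size s <= n)%N) -> (lcis X Y <= n)%N.
Proof. by move=> H; apply/bigmax_leqP => i /H. Qed.

Lemma inflate_cons a A : inflate (a :: A) = 2 * a - 1 :: 2 * a :: inflate A.
Proof. by []. Qed.

Lemma size_inflate A : size (inflate A) = (2 * size A)%N.
Proof. elim: A => //= a A IH; rewrite IH; lia. Qed.

Lemma subseq_inflate t A : subseq t A -> subseq (inflate t) (inflate A).
Proof.
elim: A t => [|a A IH] [|x t] //.
- rewrite [subseq (x :: t) _]/= !inflate_cons.
  case: eqP => [->|_] H.
  + by rewrite /= !eqxx; apply: IH.
  + rewrite -inflate_cons; apply: subseq_trans (IH _ H) _.
    by apply: (subseq_trans (subseq_cons _ _)); apply: subseq_cons.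
Qed.

Lemma path_inflate x t : path (fun a b : int => a < b) x t ->
  path (fun a b : int => a < b) (2 * x) (inflate t).
Proof.
elim: t x => [|y t IH] x //; rewrite inflate_cons /= => /andP[xy pt].
rewrite IH // andbT; apply/andP; split; lia.
Qed.

Lemma sorted_inflate t : sorted (fun a b : int => a < b) t ->
  sorted (fun a b : int => a < b) (inflate t).
Proof.
case: t => [|x t] //; rewrite inflate_cons /= => pt; rewrite path_inflate // andbT; lia.
Qed.

Definition pev (x : int) : bool := ((x %% 2)%Z == 0).

Lemma filter_ev A : [seq x <- inflate A | pev x] = map (fun a => 2 * a) A.
Proof.
elim: A => // a A IH; rewrite inflate_cons /= /pev.
have -> : ((2 * a - 1) %% 2)%Z == 0 = false by apply/eqP; lia.
have -> : ((2 * a) %% 2)%Z == 0 = true by apply/eqP; lia.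
by rewrite IH.
Qed.

Lemma filter_od A : [seq x <- inflate A | predC pev x] = map (fun a => 2 * a - 1) A.
Proof.
elim: A => // a A IH; rewrite inflate_cons /= /pev.
have -> : ((2 * a - 1) %% 2)%Z == 0 = false by apply/eqP; lia.
have -> : ((2 * a) %% 2)%Z == 0 = true by apply/eqP; lia.
by rewrite IH.
Qed.

Lemma cis_from (g : int -> int) (s A B : seq int) :
  (forall x y, (g x < g y) = (x < y)) ->
  sorted (fun a b : int => a < b) s ->
  subseq s (map g A) -> subseq s (map g B) -> (size s <= lcis A B)%N.
Proof.
move=> gmono ss /subseqP[m _ sA] /subseqP[m' _ sB].
have ginj : injective g.
  move=> x y gxy; apply/eqP; rewrite eq_le !leNgt -(gmono y x) -(gmono x y) gxy.
  by rewrite ltxx.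
rewrite -map_mask in sA; rewrite -map_mask in sB.
have E : mask m A = mask m' B by apply: (inj_map ginj); rewrite -sA -sB.
have -> : size s = size (mask m A) by rewrite sA size_map.
apply: lcis_ub; apply/and3P; split.
- move: ss; rewrite sA sorted_map; apply: sub_sorted => x y /=.
  by rewrite gmono.
- exact: mask_subseq.
- rewrite E; exact: mask_subseq.
Qed.

End Aux.

Theorem lemma9 (A B : seq int) :
  lcis (inflate A) (inflate B) = (2 * lcis A B)%N.
Proof.
apply/eqP; rewrite eqn_leq; apply/andP; split.
- apply: lcis_le => s /and3P[ss sA sB].
  rewrite -(count_predC pev) -!size_filter.
  have ltT : transitive (fun a b : int => (a < b)%R).
    by move=> x y z; apply: lt_trans.
  have H1 : (size [seq x <- s | pev x] <= lcis A B)%N.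
    apply: (@cis_from (fun a => 2 * a)%R).
    - move=> x y; apply/idP/idP; lia.
    - exact: sorted_filter.
    - by rewrite -filter_ev subseq_filter filter_all (subseq_trans (filter_subseq _ _) sA).
    - by rewrite -filter_ev subseq_filter filter_all (subseq_trans (filter_subseq _ _) sB).
  have H2 : (size [seq x <- s | predC pev x] <= lcis A B)%N.
    apply: (@cis_from (fun a => 2 * a - 1)%R).
    - move=> x y; apply/idP/idP; lia.
    - exact: sorted_filter.
    - by rewrite -filter_od subseq_filter filter_all (subseq_trans (filter_subseq _ _) sA).
    - by rewrite -filter_od subseq_filter filter_all (subseq_trans (filter_subseq _ _) sB).
  by rewrite mul2n -addnn; apply: leq_add.
- rewrite mulnC -leq_divRL //; apply: lcis_le => t /and3P[st tA tB].
  rewrite leq_divRL // mulnC -size_inflate; apply: lcis_ub.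
  by rewrite /is_cis sorted_inflate // !subseq_inflate.
Qed.
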